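(* Let $X\subseteq\mathbf{P}(\mathbf{w})$, $\mathbf{w}=(w_0,\dots,w_n)$, be a closed subscheme of dimension $d$ with Hilbert quasi-polynomial $HQ_X(t)=\sum_{i=0}^d c_i(t)t^i$. Let $m$ be a positive integer, let $\mathbf{w}'=(w_0,\dots,w_n,m)$, and let $X'\subseteq\mathbf{P}(\mathbf{w}')$ be the $m$-cone over $X$. Then \[ \deg(X')=\frac{d!}{q'}\sum_{\substack{0\le j<q\\ \gcd(m,q)\mid j}} c_d(j), \] where $q=\operatorname{lcm}(w_0,\dots,w_n)$ and $q'=\operatorname{lcm}(w_0,\dots,w_n,m)$.
   Context: $\Bbbk$ algebraically closed; $S(\mathbf{w})=\Bbbk[x_0,\dots,x_n]$ graded by $\deg x_i=w_i$, $\mathbf{P}(\mathbf{w})=\operatorname{Proj}S(\mathbf{w})$. For a closed subscheme $X$ of dimension $d$ with homogeneous ideal $I_X$, the Hilbert function $t\mapsto\dim_\Bbbk(S(\mathbf{w})/I_X)_t$ agrees for $t\gg0$ with a quasi-polynomial $HQ_X(t)=\sum_{i=0}^d c_i(t)t^i$ whose coefficients $c_i:\mathbb{Z}\to\Bbbk$ are periodic, $c_d\ne0$, with period dividing $\operatorname{lcm}(w_0,\dots,w_n)$. The degree of $X$ is $\deg X=d!\,c_d(0)$. If $\mathbf{w}'$ is obtained by appending $m$ to $\mathbf{w}$, the $m$-cone over $X$ is the subscheme of $\mathbf{P}(\mathbf{w}')$ defined by $I_X S(\mathbf{w}')$. *)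

(* Defs.v *)
From HB Require Import structures.
From mathcomp Require Import all_boot all_order all_algebra.
From mathcomp Require Import mpoly.
Set Implicit Arguments. Unset Strict Implicit. Unset Printing Implicit Defensive.
Import Order.TTheory GRing.Theory Num.Theory.
Local Open Scope ring_scope.

Section WeightedGraded.
Variables (k : fieldType) (N : nat) (w : 'I_N -> nat).

Definition wdeg (a : 'X_{1..N}) : nat := (\sum_(i < N) w i * a i)%N.

Definition whomog (t : nat) (p : {mpoly k[N]}) : bool :=
  all (fun a => wdeg a == t) (msupp p).

Definition wcomp (t : nat) (p : {mpoly k[N]}) : {mpoly k[N]} :=
  \sum_(a <- msupp p | wdeg a == t) p@_a *: 'X_[a].

Definition is_ideal (I : {mpoly k[N]} -> Prop) : Prop :=
  [/\ I 0,
      forall p q, I p -> I q -> I (p + q)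
    & forall r p, I p -> I (r * p)].

Definition is_homog_ideal (I : {mpoly k[N]} -> Prop) : Prop :=
  is_ideal I /\ forall p t, I p -> I (wcomp t p).

(* s is a family of elements of S(w)_t whose classes in (S(w)/J)_t are
   linearly independent over k *)
Definition indep_mod (J : {mpoly k[N]} -> Prop) (t : nat)
    (s : seq {mpoly k[N]}) : Prop :=
  all (whomog t) s /\
  forall c : 'I_(size s) -> k,
    J (\sum_(i < size s) c i *: s`_i) -> forall i, c i = 0.

(* hilb_fun J t h : dim_k (S(w)/J)_t = h  (dimension = maximal size of a
   linearly independent family) *)
Definition hilb_fun (J : {mpoly k[N]} -> Prop) (t h : nat) : Prop :=
  (exists s, size s = h /\ indep_mod J t s) /\
  (forall s, indep_mod J t s -> (size s <= h)%N).

Definition hilb_eventually (J : {mpoly k[N]} -> Prop) (Q : int -> rat) : Prop :=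
  exists t0 : nat, forall t : nat, (t0 <= t)%N ->
    exists h : nat, hilb_fun J t h /\ h%:R = Q t%:Z.

End WeightedGraded.

Definition hquasipoly (c : nat -> int -> rat) (d : nat) (t : int) : rat :=
  \sum_(i < d.+1) c i t * (t%:~R) ^+ i.

Definition periodic_coeffs (c : nat -> int -> rat) (d q : nat) : Prop :=
  forall i t, (i <= d)%N -> c i (t + q%:Z)%R = c i t.

Definition wlcm (N : nat) (w : 'I_N -> nat) : nat := \big[lcmn/1%N]_(i < N) w i.

Definition wext (n : nat) (w : 'I_n.+1 -> nat) (m : nat) : 'I_n.+2 -> nat :=
  fun i => if unlift ord_max i is Some j then w j else m.

(* the m-cone: the ideal I S(w') of S(w') = k[x_0..x_n, x_{n+1}] generated by I *)
Definition cone_ideal (k : fieldType) (n : nat) (I : {mpoly k[n.+1]} -> Prop)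
    : {mpoly k[n.+2]} -> Prop :=
  fun g => exists s : seq ({mpoly k[n.+2]} * {mpoly k[n.+1]}),
    (forall x, x \in s -> I x.2) /\
    g = \sum_(x <- s) x.1 * mwiden x.2.

(* Main.v *)
Require Import Defs.
From HB Require Import structures.
From mathcomp Require Import all_boot all_order all_algebra.
From mathcomp Require Import mpoly.
From Stdlib Require Import Classical IndefiniteDescription.
From mathcomp Require Import zify.
Import Order.TTheory GRing.Theory Num.Theory.
Local Open Scope ring_scope.
Set Implicit Arguments. Unset Strict Implicit. Unset Printing Implicit Defensive.

Section LinAlg.
Variables (K : fieldType) (N : nat).
Variable K0 : 'rV[K]_N -> Prop.
Hypotheses (K00 : K0 0) (K0D : forall u v, K0 u -> K0 v -> K0 (u + v))
  (K0Z : forall a u, K0 u -> K0 (a *: u)).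

Lemma subspace_mx : exists B : 'M[K]_N, forall v, K0 v <-> (v <= B)%MS.
Proof.
apply: NNPP => hn.
have step : forall B : 'M[K]_N, (forall v, (v <= B)%MS -> K0 v) ->
    exists B' : 'M[K]_N, (\rank B < \rank B')%N /\ (forall v, (v <= B')%MS -> K0 v).
  move=> B hB.
  have [v [Kv nvB]] : exists v, K0 v /\ ~~ (v <= B)%MS.
    apply: NNPP => hv; apply: hn; exists B => v; split; last exact: hB.
    move=> Kv; case: (boolP (v <= B)%MS) => // nv; exfalso; apply: hv; by exists v.
  exists (B + v)%MS; split.
    have: (B < B + v)%MS.
      rewrite ltmxE addsmxSl /=; apply: contra nvB => h.
      exact: submx_trans (addsmxSr B v) h.
    by rewrite ltmxErank => /andP [].
  move=> u /sub_addsmxP [[x y] /= ->]; apply: K0D.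
    by apply: hB; apply: submxMl.
  have /sub_rVP [a ->] : (y *m v <= v)%MS by apply: submxMl.
  by apply: K0Z.
have : forall j, exists B : 'M[K]_N, (j <= \rank B)%N /\ (forall v, (v <= B)%MS -> K0 v).
  elim=> [|j [B [hj hB]]].
    by exists 0; split=> // v; rewrite submx0 => /eqP ->.
  have [B' [h1 h2]] := step B hB; exists B'; split=> //.
  exact: leq_ltn_trans hj h1.
move=> /(_ N.+1) [B [h _]].
by move: (leq_trans h (rank_leq_col B)); rewrite ltnn.
Qed.

Lemma dim_split (P2 : 'rV[K]_N -> Prop) (h1 h2 : nat) :
  (forall v, K0 v -> P2 v -> v = 0) ->
  (forall p (C : 'M[K]_(p, N)), (forall a, K0 (a *m C) -> a = 0) -> (p <= h1)%N) ->
  (forall p (C : 'M[K]_(p, N)), (forall a, P2 (a *m C) -> a = 0) -> (p <= h2)%N) ->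
  (N <= h1 + h2)%N.
Proof.
move=> h0 H1 H2; have [B hB] := subspace_mx.
have r1 : (\rank B^C%MS <= h1)%N.
  apply: (H1 _ (row_base B^C%MS)) => a /hB aB; apply/eqP.
  rewrite -(mulmx_free_eq0 _ (row_base_free _)) -submx0 -(capmx_compl B) sub_capmx aB /=.
  by rewrite -(eq_row_base B^C%MS) submxMl.
have r2 : (\rank B <= h2)%N.
  apply: (H2 _ (row_base B)) => a Pa; apply/eqP.
  rewrite -(mulmx_free_eq0 _ (row_base_free _)); apply/eqP; apply: h0 Pa.
  by apply/hB; rewrite -(eq_row_base B) submxMl.
move: (leq_add r1 r2); rewrite mxrank_compl subnK //; exact: rank_leq_col.
Qed.

End LinAlg.

Section Homog.
Variables (k : fieldType) (N : nat) (w : 'I_N -> nat).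

Lemma whomogP t (p : {mpoly k[N]}) :
  whomog w t p <-> (forall a, p@_a != 0 -> wdeg w a = t).
Proof.
split.
  by move=> /allP h a nz; apply/eqP/h; rewrite mcoeff_msupp.
by move=> h; apply/allP => a; rewrite mcoeff_msupp => /h ->.
Qed.

Lemma whomog0 t : whomog w t (0 : {mpoly k[N]}).
Proof. by apply/whomogP => a; rewrite mcoeff0 eqxx. Qed.

Lemma whomogD t (p q : {mpoly k[N]}) : whomog w t p -> whomog w t q -> whomog w t (p + q).
Proof.
move=> /whomogP hp /whomogP hq; apply/whomogP => a; rewrite mcoeffD.
by case: (eqVneq p@_a 0) => [->|/hp //]; rewrite add0r => /hq.
Qed.

Lemma whomogZ t c (p : {mpoly k[N]}) : whomog w t p -> whomog w t (c *: p).
Proof.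
move=> /whomogP hp; apply/whomogP => a; rewrite mcoeffZ.
by case: (eqVneq p@_a 0) => [->|/hp //]; rewrite mulr0 eqxx.
Qed.

Lemma whomog_sum t (I : Type) (r : seq I) (F : I -> {mpoly k[N]}) :
  (forall i, whomog w t (F i)) -> whomog w t (\sum_(i <- r) F i).
Proof.
move=> h; elim: r => [|x r ih]; first by rewrite big_nil whomog0.
by rewrite big_cons whomogD.
Qed.

End Homog.

Lemma indep_nth (k : fieldType) (V : lmodType k) (P : V -> Prop) (s : seq V) p :
  size s = p ->
  (forall c : 'I_p -> k, P (\sum_(j < p) c j *: s`_j) -> forall j, c j = 0) ->
  forall c : 'I_(size s) -> k, P (\sum_(j < size s) c j *: s`_j) -> forall j, c j = 0.
Proof. by move=> e; subst p. Qed.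

Lemma nth_map_enum (T : Type) (x0 : T) p (F : 'I_p -> T) (j : 'I_p) :
  nth x0 [seq F i | i <- enum 'I_p] j = F j.
Proof. by rewrite (nth_map j) ?size_enum_ord // nth_ord_enum. Qed.

Lemma lin_sum (k : fieldType) (U V : lmodType k) (f : U -> V) :
  f 0 = 0 -> (forall c p q, f (c *: p + q) = c *: f p + f q) ->
  forall (T : Type) (r : seq T) (c : T -> k) (F : T -> U),
  f (\sum_(i <- r) c i *: F i) = \sum_(i <- r) c i *: f (F i).
Proof.
move=> f0 fl T r c F; elim: r => [|x r ih]; first by rewrite !big_nil.
by rewrite !big_cons fl ih.
Qed.

Section Cone.
Variables (k : fieldType) (n : nat) (w : 'I_n.+1 -> nat) (m : nat).
Local Notation S := {mpoly k[n.+1]}.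
Local Notation S' := {mpoly k[n.+2]}.
Local Notation w' := (wext w m).
Local Notation mx := (@ord_max n.+1).
Definition yv : S' := 'X_[U_(mx)].

Definition narrow (a : 'X_{1..n.+2}) : 'X_{1..n.+1} :=
  [multinom a (widen_ord (leqnSn _) i) | i < n.+1].

Lemma widen_lift (i : 'I_n.+1) : widen_ord (leqnSn _) i = lift mx i.
Proof. by apply: val_inj; rewrite /= /bump leqNgt ltn_ord. Qed.

Lemma wext_widen i : w' (widen_ord (leqnSn _) i) = w i.
Proof. by rewrite /wext widen_lift liftK. Qed.

Lemma wext_max : w' mx = m.
Proof. by rewrite /wext unlift_none. Qed.

Lemma mnm_cases (a : 'X_{1..n.+2}) :
  (a mx = 0%N /\ a = mnmwiden (narrow a)) \/ a = (U_(mx) + (a - U_(mx)))%MM.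
Proof.
case: (posnP (a mx)) => h; [left; split=> //|right].
  apply/mnmP=> i; case: (unliftP mx i) => [j ->|->]; last by rewrite mnmwiden_ordmax.
  by rewrite -widen_lift mnmwiden_widen mnmE.
apply/mnmP=> i; rewrite mnmDE mnmBE mnm1E; case: eqP => [<-|_]; last by rewrite subn0.
by rewrite add1n subn1 prednK.
Qed.

Lemma wdeg_widen c : wdeg w' (mnmwiden c) = wdeg w c.
Proof.
rewrite /wdeg big_ord_recr /= mnmwiden_ordmax muln0 addn0.
by apply: eq_bigr => i _; rewrite wext_widen mnmwiden_widen.
Qed.

Lemma wdegD (a b : 'X_{1..n.+2}) : wdeg w' (a + b)%MM = (wdeg w' a + wdeg w' b)%N.
Proof. by rewrite /wdeg -big_split; apply: eq_bigr => i _; rewrite mnmDE mulnDr. Qed.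

Lemma wdegU : wdeg w' U_(mx)%MM = m.
Proof.
rewrite /wdeg big_ord_recr /= mnm1E eqxx muln1 wext_max big1 // => i _.
rewrite mnm1E; case: eqP => [/(congr1 val)/= h|]; last by rewrite muln0.
by move: (ltn_ord i); rewrite -h ltnn.
Qed.


Lemma mwiden_coeff_max (p : S) (a : 'X_{1..n.+2}) : a mx != 0%N -> (mwiden p)@_a = 0.
Proof.
move=> ha; elim/mpolyind: p => [|c b p _ _ ih]; first by rewrite mwiden0 mcoeff0.
rewrite mwidenD mwidenZ mwidenX mcoeffD mcoeffZ mcoeffX ih addr0.
case: eqP => [e|]; last by rewrite mulr0.
by move: ha; rewrite -e mnmwiden_ordmax.
Qed.

Lemma mulY_coeff (p : S') (a : 'X_{1..n.+2}) : a mx = 0%N -> (p * yv)@_a = 0.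
Proof.
move=> ha; elim/mpolyind: p => [|c b p _ _ ih]; first by rewrite mul0r mcoeff0.
rewrite mulrDl -scalerAl mcoeffD mcoeffZ ih addr0 /yv -mpolyXD mcoeffX.
case: eqP => [e|]; last by rewrite mulr0.
by move: ha; rewrite -e mnmDE mnm1E eqxx addn1.
Qed.

Lemma dec_coeff1 (B : S) (A : S') c : (mwiden B + A * yv)@_(mnmwiden c) = B@_c.
Proof. by rewrite mcoeffD mwiden_mnmwiden mulY_coeff ?addr0 // mnmwiden_ordmax. Qed.

Lemma dec_coeff2 (B : S) (A : S') b : (mwiden B + A * yv)@_(U_(mx) + b)%MM = A@_b.
Proof.
by rewrite mcoeffD /yv mcoeffMX mwiden_coeff_max ?add0r // mnmDE mnm1E eqxx.
Qed.

Lemma decomp (p : S') : exists B A, p = mwiden B + A * yv.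
Proof.
elim/mpolyind: p => [|c a p _ _ [B [A ->]]]; first by exists 0, 0; rewrite mwiden0 mul0r addr0.
case: (mnm_cases a) => [[_ ->]|->].
  exists (c *: 'X_[narrow a] + B), A.
  by rewrite mwidenD mwidenZ mwidenX addrA.
exists B, (c *: 'X_[a - U_(mx)] + A).
by rewrite mulrDl -scalerAl /yv -mpolyXD addmC addrCA.
Qed.

Lemma dec_uniq (B : S) (A : S') : mwiden B + A * yv = 0 -> B = 0 /\ A = 0.
Proof.
move=> e; split; apply/mpolyP => x; rewrite mcoeff0.
  by rewrite -(dec_coeff1 _ A) e mcoeff0.
by rewrite -(dec_coeff2 B) e mcoeff0.
Qed.

Lemma dec_uniq2 (B B' : S) (A A' : S') :
  mwiden B + A * yv = mwiden B' + A' * yv -> B = B' /\ A = A'.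
Proof.
move=> e; have := @dec_uniq (B - B') (A - A').
rewrite mwidenB mulrBl addrACA -opprD e subrr => /(_ erefl) [/eqP h1 /eqP h2].
by split; apply/eqP; rewrite -subr_eq0.
Qed.


Lemma hom_widen t (B : S) : whomog w t B -> whomog w' t (mwiden B).
Proof.
move=> /whomogP h; apply/whomogP => a.
case: (mnm_cases a) => [[_ ->]|->].
  by rewrite mwiden_mnmwiden wdeg_widen => /h.
by rewrite mwiden_coeff_max ?eqxx // mnmDE mnm1E eqxx.
Qed.

Lemma hom_mulY t (A : S') : whomog w' t A -> whomog w' (m + t) (A * yv).
Proof.
move=> /whomogP h; apply/whomogP => a.
case: (mnm_cases a) => [[h0 _]|->]; first by rewrite mulY_coeff ?eqxx.
by rewrite /yv mcoeffMX wdegD wdegU => /h ->.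
Qed.

Lemma hom_dec T (B : S) (A : S') : whomog w' T (mwiden B + A * yv) ->
  whomog w T B /\ whomog w' (T - m) A.
Proof.
move=> /whomogP h; split; apply/whomogP => a.
  by rewrite -(dec_coeff1 _ A) => /h; rewrite wdeg_widen.
by rewrite -(dec_coeff2 B) => /h; rewrite wdegD wdegU => <-; rewrite addKn.
Qed.


Variable (I : S -> Prop).
Hypothesis idI : is_ideal I.
Local Notation J := (cone_ideal I).

Lemma J0 : J 0.
Proof. by exists [::]; rewrite big_nil. Qed.

Lemma JD p q : J p -> J q -> J (p + q).
Proof.
move=> [s1 [h1 ->]] [s2 [h2 ->]]; exists (s1 ++ s2); rewrite big_cat; split=> //.
by move=> x; rewrite mem_cat => /orP [/h1|/h2].
Qed.

Lemma JM r p : J p -> J (r * p).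
Proof.
move=> [s [h ->]]; exists [seq (r * x.1, x.2) | x <- s]; split.
  by move=> x /mapP [y ys ->]; exact: h y ys.
rewrite mulr_sumr; elim: s {h} => [|x s ih]; first by rewrite !big_nil.
by rewrite /= !big_cons ih mulrA.
Qed.

Lemma JZ c p : J p -> J (c *: p).
Proof. by rewrite -mul_mpolyC; apply: JM. Qed.

Lemma Jsum (T : Type) (r : seq T) (F : T -> S') :
  (forall i, J (F i)) -> J (\sum_(i <- r) F i).
Proof.
move=> h; elim: r => [|x r ih]; first by rewrite big_nil; apply: J0.
by rewrite big_cons; apply: JD.
Qed.

Lemma Jwiden B : I B -> J (mwiden B).
Proof.
by move=> h; exists [:: (1, B)]; split; [move=> x; rewrite inE => /eqP -> | rewrite big_seq1 mul1r].
Qed.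

Lemma JmulY A : J A -> J (A * yv).
Proof. by rewrite mulrC; apply: JM. Qed.

Lemma Jdec0 g : J g -> exists B A, [/\ g = mwiden B + A * yv, I B & J A].
Proof.
case: idI => I0 ID IM.
move=> [s [h ->]]; elim: s h => [|x s ih] h.
  by exists 0, 0; rewrite big_nil mwiden0 mul0r addr0; split=> //; apply: J0.
rewrite big_cons; have [B [A [-> IB JA]]] := ih (fun y ys => h y (@mem_behead _ (x :: s) _ ys)).
have [a0 [a1 e]] := decomp x.1.
exists (a0 * x.2 + B), (a1 * mwiden x.2 + A); split.
- rewrite e mwidenD mwidenM mulrDl addrACA; congr (_ + _).
  by rewrite mulrDl mulrAC.
- by apply: ID => //; apply: IM; exact: h x (mem_head x s).
- apply: JD => //; exists [:: (a1, x.2)]; split; last by rewrite big_seq1.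
  by move=> y; rewrite inE => /eqP ->; exact: h x (mem_head x s).
Qed.

Lemma Jdec B A : J (mwiden B + A * yv) -> I B /\ J A.
Proof.
move=> /Jdec0 [B' [A' [e IB JA]]].
by have [-> ->] := dec_uniq2 e.
Qed.


Lemma decomp' (p : S') : exists q : S * S', p = mwiden q.1 + q.2 * yv.
Proof. by have [B [A e]] := decomp p; exists (B, A). Qed.

Definition dpair (p : S') : S * S' := proj1_sig (constructive_indefinite_description _ (decomp' p)).
Definition pi0 p := (dpair p).1.
Definition sg p := (dpair p).2.

Lemma dspec p : p = mwiden (pi0 p) + sg p * yv.
Proof. exact: (proj2_sig (constructive_indefinite_description _ (decomp' p))). Qed.

Lemma dlin c p q : pi0 (c *: p + q) = c *: pi0 p + pi0 q /\ sg (c *: p + q) = c *: sg p + sg q.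
Proof.
apply: dec_uniq2; rewrite -dspec mwidenD mwidenZ mulrDl -scalerAl addrACA -scalerDr.
by rewrite -!dspec.
Qed.

Lemma pi00 : pi0 0 = 0 /\ sg 0 = 0.
Proof. by apply: dec_uniq; rewrite -dspec. Qed.

Lemma pi0_hom T p : whomog w' T p -> whomog w T (pi0 p) /\ whomog w' (T - m) (sg p).
Proof. by rewrite {1}[p]dspec; apply: hom_dec. Qed.



Lemma piD p q : pi0 (p + q) = pi0 p + pi0 q /\ sg (p + q) = sg p + sg q.
Proof. by have := dlin 1 p q; rewrite !scale1r. Qed.

Lemma piZ c p : pi0 (c *: p) = c *: pi0 p /\ sg (c *: p) = c *: sg p.
Proof. by have := dlin c p 0; rewrite !addr0 (proj1 pi00) (proj2 pi00) !addr0. Qed.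

Lemma Jspec p : I (pi0 p) -> J (sg p) -> J p.
Proof. by move=> h1 h2; rewrite [p]dspec; apply: JD; [apply: Jwiden | apply: JmulY]. Qed.

Lemma Jpi p : J p -> I (pi0 p) /\ J (sg p).
Proof. by rewrite {1}[p]dspec => /Jdec. Qed.


Lemma hilb_upper T h H0 s : (m <= T)%N -> hilb_fun w I T h ->
  hilb_fun w' J (T - m) H0 -> indep_mod w' J T s -> (size s <= h + H0)%N.
Proof.
move=> mT [_ Hh] [_ HH0] [/allP hs ind].
pose g (v : 'rV[k]_(size s)) := \sum_(i < size s) v 0 i *: s`_i.
have g0 : g 0 = 0 by rewrite /g big1 // => i _; rewrite mxE scale0r.
have gD u v : g (u + v) = g u + g v.
  by rewrite /g -big_split; apply: eq_bigr => i _; rewrite mxE scalerDl.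
have gZ a u : g (a *: u) = a *: g u.
  by rewrite /g scaler_sumr; apply: eq_bigr => i _; rewrite mxE scalerA.
have gh v : whomog w' T (g v).
  by apply: whomog_sum => i; apply: whomogZ; apply: hs; apply: mem_nth.
apply: (@dim_split k (size s) (fun v => I (pi0 (g v))) _ _ _ (fun v => J (sg (g v)))).
- by rewrite g0 (proj1 pi00); case: idI.
- by move=> u v; rewrite gD (proj1 (piD _ _)); case: idI => _ ID _; apply: ID.
- move=> a u; rewrite gZ (proj1 (piZ _ _)) -mul_mpolyC; case: idI => _ _ IM; apply: IM.
- move=> v h1 h2; have := ind (fun i => v 0 i) (Jspec h1 h2) => hv.
  by apply/rowP => i; rewrite mxE hv.
- move=> p C hC.
  have := Hh [seq pi0 (g (row j C)) | j <- enum 'I_p]; rewrite size_map size_enum_ord; apply.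
  split.
    by apply/allP => x /mapP [j _ ->]; exact: (pi0_hom (gh _)).1.
  apply: indep_nth; first by rewrite size_map size_enum_ord.
  move=> c hc j; have := hC (\row_j c j).
  rewrite mulmx_sum_row.
  have -> : \sum_i (\row_j0 c j0) 0 i *: row i C = \sum_i c i *: row i C.
    by apply: eq_bigr => i _; rewrite mxE.
  have -> : pi0 (g (\sum_i c i *: row i C)) = \sum_i c i *: pi0 (g (row i C)).
    rewrite (lin_sum (f := fun u => pi0 (g u))) //.
      by rewrite g0 (proj1 pi00).
    by move=> a u u'; rewrite gD gZ (proj1 (piD _ _)) (proj1 (piZ _ _)).
  move=> hz; suff /hz /(congr1 (fun M : 'rV_p => M 0 j)) : I (\sum_i c i *: pi0 (g (row i C))).
    by rewrite !mxE.
  by move: hc; congr I; apply: eq_bigr => i _; rewrite (nth_map_enum _ (fun j0 => pi0 (g (row j0 C)))).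
- move=> p C hC.
  have := HH0 [seq sg (g (row j C)) | j <- enum 'I_p]; rewrite size_map size_enum_ord; apply.
  split.
    by apply/allP => x /mapP [j _ ->]; exact: (pi0_hom (gh _)).2.
  apply: indep_nth; first by rewrite size_map size_enum_ord.
  move=> c hc j; have := hC (\row_j c j).
  rewrite mulmx_sum_row.
  have -> : \sum_i (\row_j0 c j0) 0 i *: row i C = \sum_i c i *: row i C.
    by apply: eq_bigr => i _; rewrite mxE.
  have -> : sg (g (\sum_i c i *: row i C)) = \sum_i c i *: sg (g (row i C)).
    rewrite (lin_sum (f := fun u => sg (g u))) //.
      by rewrite g0 (proj2 pi00).
    by move=> a u u'; rewrite gD gZ (proj2 (piD _ _)) (proj2 (piZ _ _)).
  move=> hz; suff /hz /(congr1 (fun M : 'rV_p => M 0 j)) : J (\sum_i c i *: sg (g (row i C))).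
    by rewrite !mxE.
  by move: hc; congr J; apply: eq_bigr => i _; rewrite (nth_map_enum _ (fun j0 => sg (g (row j0 C)))).
Qed.


Lemma hilb_lower T s1 s2 : (m <= T)%N -> indep_mod w I T s1 ->
  indep_mod w' J (T - m) s2 ->
  indep_mod w' J T ([seq mwiden x | x <- s1] ++ [seq x * yv | x <- s2]).
Proof.
move=> mT [/allP h1 ind1] [/allP h2 ind2]; split.
  apply/allP => x; rewrite mem_cat => /orP [] /mapP [y ys ->].
    by apply: hom_widen; apply: h1.
  by rewrite -(subnKC mT); apply: hom_mulY; apply: h2.
apply: indep_nth; first by rewrite size_cat !size_map.
move=> c hc.
rewrite big_split_ord /= in hc.
have e1 (i : 'I_(size s1)) : ([seq mwiden x | x <- s1] ++ [seq x * yv | x <- s2])`_(lshift (size s2) i) = mwiden s1`_i.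
  by rewrite nth_cat size_map (_ : (lshift (size s2) i : nat) = i) // ltn_ord (nth_map 0).
have e2 (i : 'I_(size s2)) : ([seq mwiden x | x <- s1] ++ [seq x * yv | x <- s2])`_(rshift (size s1) i) = s2`_i * yv.
  by rewrite nth_cat size_map (_ : (rshift (size s1) i : nat) = size s1 + i)%N // ltnNge leq_addr /= addKn (nth_map 0).
move: hc; rewrite (eq_bigr (fun i : 'I_(size s1) => mwiden (c (lshift _ i) *: s1`_i))); last first.
  by move=> i _; rewrite e1 mwidenZ.
rewrite (eq_bigr (fun i : 'I_(size s2) => (c (rshift _ i) *: s2`_i) * yv)); last first.
  by move=> i _; rewrite e2 scalerAl.
rewrite -raddf_sum -mulr_suml => /Jdec [/ind1 hl /ind2 hr] j.
by rewrite -(splitK j); case: (split j) => [a|b] /=; [apply: hl | apply: hr].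
Qed.

Lemma hilb_step T h H0 H : (m <= T)%N -> hilb_fun w I T h ->
  hilb_fun w' J (T - m) H0 -> hilb_fun w' J T H -> H = (h + H0)%N.
Proof.
move=> mT hh hH0 [[s [<- ids]] HH]; apply/eqP; rewrite eqn_leq.
rewrite (hilb_upper mT hh hH0 ids) /=.
case: hh => [[s1 [<- i1]] _]; case: hH0 => [[s2 [<- i2]] _].
by have := HH _ (hilb_lower mT i1 i2); rewrite size_cat !size_map.
Qed.

End Cone.



Lemma coef_lin_pow (R : comNzRingType) (a b : R) n i :
  ((a *: 'X + b%:P) ^+ n)`_i = a ^+ i * b ^+ (n - i) *+ 'C(n, i).
Proof.
rewrite addrC exprDn coef_sum.
have hk (k : 'I_n.+1) : ((b%:P ^+ (n - k) * (a *: 'X) ^+ k) *+ 'C(n, k))`_i =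
    (k == i :> nat)%:R * (a ^+ i * b ^+ (n - i) *+ 'C(n, i)).
  rewrite coefMn exprZn -polyC_exp -scalerAr coefZ coefCM coefXn eq_sym.
  by case: eqP => [->|_]; [rewrite mulr1 mul1r | rewrite mulr0 mulr0 mul0r mul0rn].
under eq_bigr do rewrite hk.
case: (ltnP n i) => hi.
  by rewrite bin_small // mulr0n big1 // => k _; rewrite mulr0.
rewrite (bigD1 (Ordinal (hi : i < n.+1)%N)) //= eqxx mul1r big1 ?addr0 // => k hk'.
by rewrite (_ : (k == i :> nat) = false) ?mul0r //; apply/negbTE; apply: contra hk' => /eqP e; apply/eqP/val_inj.
Qed.

Lemma poly_step (a : nat -> rat) (cc : nat -> nat -> rat) (bb : nat -> rat) (qq : rat) d r s0 :
  (forall s : nat, (s0 <= s)%N -> \sum_(i < d.+2) a i * ((s.+1)%:R ^+ i - s%:R ^+ i) =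
     \sum_(j < r) \sum_(i < d.+1) cc j i * (qq * s%:R + bb j) ^+ i) ->
  (d.+1)%:R * a d.+1 = \sum_(j < r) cc j d * qq ^+ d.
Proof.
move=> h.
pose Rp : {poly rat} := \sum_(i < d.+2) a i *: ((1 *: 'X + 1%:P) ^+ i - 'X^i).
pose Gp : {poly rat} := \sum_(j < r) \sum_(i < d.+1) cc j i *: (qq *: 'X + (bb j)%:P) ^+ i.
have e : Rp - Gp = 0.
  apply: (@roots_geq_poly_eq0 _ _ [seq (s0 + i)%:R | i <- iota 0 (size (Rp - Gp))]).
  - apply/allP => x /mapP [i _ ->]; rewrite /root hornerD hornerN.
    have -> : Rp.[(s0 + i)%:R] = \sum_(l < d.+2) a l * (((s0 + i).+1)%:R ^+ l - (s0 + i)%:R ^+ l).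
      rewrite horner_sum; apply: eq_bigr => l _.
      by rewrite hornerZ hornerD hornerN horner_exp hornerD hornerZ hornerX hornerC hornerXn mul1r -natr1.
    have -> : Gp.[(s0 + i)%:R] = \sum_(j < r) \sum_(l < d.+1) cc j l * (qq * (s0 + i)%:R + bb j) ^+ l.
      rewrite horner_sum; apply: eq_bigr => j _; rewrite horner_sum; apply: eq_bigr => l _.
      by rewrite hornerZ horner_exp hornerD hornerZ hornerX hornerC.
    by rewrite h ?leq_addr // subrr.
  - rewrite map_inj_uniq ?iota_uniq // => x y /eqP; rewrite eqr_nat eqn_add2l => /eqP //.
  - by rewrite size_map size_iota.
move/eqP: e; rewrite subr_eq0 => /eqP /(congr1 (fun p : {poly rat} => p`_d)).
rewrite /Rp /Gp !coef_sum.
under eq_bigr do rewrite coefZ coefB coef_lin_pow coefXn !expr1n !mul1r.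
under [in RHS]eq_bigr do rewrite coef_sum; under [in RHS]eq_bigr do under eq_bigr do rewrite coefZ coef_lin_pow.
rewrite !big_ord_recr /= big1; last first.
  move=> i _; rewrite bin_small // (_ : (d == i) = false) ?subrr ?mulr0 //.
  by apply/negbTE; rewrite neq_ltn ltn_ord orbT.
rewrite binn eqxx subrr mulr0 add0r (_ : (d == d.+1) = false); last by rewrite eqn_leq ltnn andbF.
rewrite binSn subr0 mulrC => ->; apply: eq_bigr => j _; rewrite big_ord_recr /= big1 ?add0r.
  by rewrite subnn expr0 mulr1 binn mulr1n.
by move=> i _; rewrite bin_small ?mulr0n ?mulr0.
Qed.



Section NT.
Variable (V : nmodType) (F : nat -> V).

Lemma sum_dvd_range g r : (0 < g)%N ->
  \sum_(0 <= j < r * g | (g %| j)%N) F j = \sum_(x < r) F (x * g)%N.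
Proof.
move=> g0; elim: r => [|r ih]; first by rewrite mul0n big_geq // big_ord0.
rewrite mulSn addnC (@big_cat_nat _ _ _ (r * g)) ?leq_addr //= ih big_ord_recr /=.
congr (_ + _); rewrite big_mkcond big_ltn; last by rewrite -{1}[(r * g)%N]addn0 ltn_add2l.
rewrite (dvdn_mull r (dvdnn g)) big_nat_cond big1; first by rewrite /= addr0.
move=> j /andP [/andP [h1 h2] _]; case: ifP => // /dvdnP [t et]; exfalso.
move: h1 h2; rewrite et ltn_mul2r g0 /= addnC -mulSn ltn_mul2r g0 /=.
by move=> h1 h2; move: (leq_ltn_trans h1 h2); rewrite ltnn.
Qed.

Lemma reindex_coprime q1 m1 (G : nat -> V) : (0 < q1)%N -> coprime q1 m1 ->
  \sum_(j < q1) G (((j + 1) * m1) %% q1)%N = \sum_(x < q1) G x.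
Proof.
move=> q0 co.
pose f (j : 'I_q1) : 'I_q1 := Ordinal (ltn_pmod ((j + 1) * m1) q0).
have finj : injective f.
  have key (j j' : 'I_q1) : (j <= j')%N -> f j = f j' -> j = j'.
    move=> le /(congr1 val) /= /eqP; rewrite eq_sym eqn_mod_dvd ?leq_mul2r ?leq_add2r ?le ?orbT //.
    rewrite -mulnBl Gauss_dvdl // subnDr => dv; apply: val_inj => /=.
    case: (posnP (j' - j)) => [h|h]; first by apply/eqP; rewrite eqn_leq le /= -subn_eq0 h.
    by move: (dvdn_leq h dv) (ltn_ord j'); lia.
  move=> j j' e; case: (leqP j j') => h; first exact: key.
  by apply/esym/key => //; apply: ltnW.
by rewrite [RHS](reindex_inj finj).
Qed.

End NT.

From mathcomp Require Import ring.

Lemma wlcm_gt0 N (w : 'I_N -> nat) : (forall i, 0 < w i)%N -> (0 < wlcm w)%N.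
Proof.
move=> h; rewrite /wlcm; elim/big_ind: _ => // x y hx hy.
by rewrite lcmn_gt0 hx hy.
Qed.

Lemma wlcm_ext n (w : 'I_n.+1 -> nat) m : wlcm (wext w m) = lcmn (wlcm w) m.
Proof.
rewrite /wlcm big_ord_recr /= wext_max; congr lcmn.
by apply: eq_bigr => i _; rewrite wext_widen.
Qed.

Lemma per_iter (c : nat -> int -> rat) d q (hp : periodic_coeffs c d q) i x t : (i <= d)%N ->
  c i (x + (q * t)%N%:Z) = c i x.
Proof.
move=> hi; elim: t => [|t ih]; first by rewrite muln0 addr0.
by rewrite mulnS addnC PoszD addrA hp.
Qed.

Lemma intr_natE (R : pzRingType) (t : nat) : ((t%:Z)%:~R : R) = t%:R.
Proof. by []. Qed.

Unset Implicit Arguments.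

Theorem lemma2p12 (k : closedFieldType) (n : nat) (w : 'I_n.+1 -> nat)
    (I : {mpoly k[n.+1]} -> Prop) (d : nat) (c : nat -> int -> rat) (m : nat) :
  (forall i, (0 < w i)%N) ->
  is_homog_ideal w I ->
  periodic_coeffs c d (wlcm w) ->
  (exists j : int, c d j != 0 :> rat) ->
  hilb_eventually w I (hquasipoly c d) ->
  (0 < m)%N ->
  forall c' : nat -> int -> rat,
    periodic_coeffs c' d.+1 (wlcm (wext w m)) ->
    hilb_eventually (wext w m) (cone_ideal I) (hquasipoly c' d.+1) ->
    ((d.+1)`!)%:R * c' d.+1 0 =
      (d`!)%:R / (lcmn (wlcm w) m)%:R *
        \sum_(0 <= j < wlcm w | (gcdn m (wlcm w) %| j)%N) c d j%:Z.
Proof.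
move=> hw [idI _] hc _ [t0 hx] hm c' hc' [t1 hx'].
rewrite wlcm_ext in hc'.
set q := wlcm w in hc hx hx' *; set q2 := lcmn q m in hc' *.
have q0 : (0 < q)%N by apply: wlcm_gt0.
set g := gcdn m q.
have g0 : (0 < g)%N by rewrite gcdn_gt0 hm.
set m1 := (m %/ g)%N; set q1 := (q %/ g)%N.
have em : m = (m1 * g)%N by rewrite divnK // dvdn_gcdl.
have eq : q = (q1 * g)%N by rewrite divnK // dvdn_gcdr.
have q10 : (0 < q1)%N by rewrite divn_gt0 // dvdn_leq // dvdn_gcdr.
have co : coprime q1 m1.
  rewrite /coprime; apply/eqP.
  have : (gcdn q1 m1 * g = 1 * g)%N by rewrite muln_gcdl -eq -em mul1n gcdnC.
  by move/eqP; rewrite eqn_pmul2r // => /eqP.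
have eq2 : q2 = (q1 * m)%N.
  rewrite /q2 /lcmn gcdnC -/g {1}eq mulnAC mulnK //.
have q20 : (0 < q2)%N by rewrite eq2 muln_gt0 q10.
set Q := hquasipoly c d; set Q' := hquasipoly c' d.+1.
have S1 t : (t0 + t1 <= t)%N -> Q' (t + m)%N%:Z = Q (t + m)%N%:Z + Q' t%:Z.
  move=> ht.
  have [H [hH eH]] := hx' (t + m)%N (leq_trans (leq_addl _ _) (leq_trans ht (leq_addr _ _))).
  have [H0 [hH0 eH0]] := hx' t (leq_trans (leq_addl _ _) ht).
  have [h [hh eh]] := hx (t + m)%N (leq_trans (leq_addr _ _) (leq_trans ht (leq_addr _ _))).
  rewrite /Q /Q' -eH -eH0 -eh -natrD; congr _%:R.
  apply: (hilb_step idI (leq_addl _ _) hh) => //.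
  by rewrite addnK.
have S2 t r : (t0 + t1 <= t)%N ->
    Q' (t + r * m)%N%:Z = Q' t%:Z + \sum_(j < r) Q (t + j.+1 * m)%N%:Z.
  move=> ht; elim: r => [|r ih]; first by rewrite mul0n addn0 big_ord0 addr0.
  rewrite big_ord_recr /= addrA -ih mulSn (addnC m) addnA S1 1?addrC //.
  exact: leq_trans ht (leq_addr _ _).
have eq2' : q2 = (q * m1)%N by rewrite eq2 em eq mulnAC mulnA.
have EQ' s : Q' (q2 * s)%N%:Z = \sum_(i < d.+2) (c' i 0 * q2%:R ^+ i) * s%:R ^+ i.
  rewrite /Q' /hquasipoly; apply: eq_bigr => i _.
  rewrite -[X in c' i X]add0r (per_iter hc') ?intr_natE ?natrM ?exprMn ?mulrA //.
  by rewrite -ltnS ltn_ord.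
have EQ s b : Q (q2 * s + b)%N%:Z = \sum_(i < d.+1) c i b%:Z * (q2%:R * s%:R + b%:R) ^+ i.
  rewrite /Q /hquasipoly; apply: eq_bigr => i _.
  rewrite intr_natE natrD natrM addnC PoszD eq2' -mulnA (per_iter hc) //.
  by rewrite -ltnS ltn_ord.
have E := @poly_step (fun i => c' i 0 * q2%:R ^+ i) (fun j i => c i (j.+1 * m)%N%:Z)
   (fun j => (j.+1 * m)%N%:R) q2%:R d q1 (t0 + t1).
have {E} E : (d.+1)%:R * (c' d.+1 0 * q2%:R ^+ d.+1) =
    \sum_(j < q1) c d (j.+1 * m)%N%:Z * q2%:R ^+ d.
  apply: E => s hs.
  have hs' : (t0 + t1 <= q2 * s)%N by apply: leq_trans hs _; rewrite leq_pmull.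
  transitivity (Q' (q2 * s.+1)%N%:Z - Q' (q2 * s)%N%:Z).
    by rewrite !EQ' -sumrB; apply: eq_bigr => i _; rewrite mulrBr.
  have -> : (q2 * s.+1 = q2 * s + q1 * m)%N by rewrite mulnS addnC -eq2.
  rewrite S2 // addrAC subrr add0r.
  by apply: eq_bigr => j _; rewrite EQ.
have NT : \sum_(j < q1) c d (j.+1 * m)%N%:Z = \sum_(0 <= j < q | (g %| j)%N) c d j%:Z.
  pose F x := c d x%:Z.
  have Fper x : F (x %% q)%N = F x.
    by rewrite /F {2}(divn_eq x q) addnC PoszD mulnC (per_iter hc).
  transitivity (\sum_(j < q1) F ((((j + 1) * m1) %% q1) * g)%N).
    by apply: eq_bigr => j _; rewrite muln_modl -eq -mulnA -em addn1 Fper.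
  rewrite (reindex_coprime (fun x => F (x * g)%N) q10 co).
  by rewrite [in RHS]eq sum_dvd_range.
have nz : (q2%:R : rat) != 0 by rewrite pnatr_eq0 -lt0n.
have ES : \sum_(0 <= j < q | (g %| j)%N) c d j%:Z = (d.+1)%:R * c' d.+1 0 * q2%:R.
  rewrite -NT; apply: (@mulIf _ (q2%:R ^+ d)); first by rewrite expf_neq0.
  rewrite mulr_suml -E exprSr; ring.
rewrite ES factS natrM; field.
exact: nz.
Qed.
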